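(* The set of $G\in\mathcal{T}$ such that the group $(\mathbb{N},G)$ is isomorphic to $(\mathbb{Q},+)$ is comeager in $\mathcal{T}$.
   Context: Let $\mathbb{N}^{\mathbb{N}\times\mathbb{N}}$ be the space of functions $\mathbb{N}\times\mathbb{N}\to\mathbb{N}$ with the product of discrete topologies (a Polish space). Let $\mathcal{A}=\{G\in\mathbb{N}^{\mathbb{N}\times\mathbb{N}}: G \text{ is an abelian group operation on } \mathbb{N} \text{ with identity element } 0\}$ and $\mathcal{T}=\{G\in\mathcal{A}: (\mathbb{N},G)\text{ is torsion-free}\}$, with the subspace topology; $\mathcal{T}$ is a Polish space (the space of countably infinite torsion-free abelian groups). Comeager means: complement is a countable union of nowhere dense sets. *)

(* Defs.v *)
From mathcomp Require Import all_boot all_order all_algebra.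
Set Implicit Arguments. Unset Strict Implicit. Unset Printing Implicit Defensive.
Import GRing.Theory.

(* The Polish space N^(N x N): points are binary operations on nat. *)
Definition Op := nat * nat -> nat.

(* Open sets of the product of discrete topologies: U is open iff every
   point of U has a basic (cylinder) neighbourhood, determined by finitely
   many coordinates, contained in U. *)
Definition is_open (U : Op -> Prop) : Prop :=
  forall f, U f -> exists F : seq (nat * nat),
    forall g, (forall i, i \in F -> g i = f i) -> U g.

Definition is_abelian_group_op (G : Op) : Prop :=
  [/\ (forall a b c, G (G (a, b), c) = G (a, G (b, c))),
      (forall a b, G (a, b) = G (b, a)),
      (forall a, G (0, a) = a) &
      (forall a, exists b, G (a, b) = 0)].

Fixpoint gmul (G : Op) (n : nat) (x : nat) : nat :=
  match n with
  | 0 => 0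
  | k.+1 => G (x, gmul G k x)
  end.

Definition torsion_free (G : Op) : Prop :=
  forall x n, x <> 0 -> 0 < n -> gmul G n x <> 0.

Definition in_T (G : Op) : Prop := is_abelian_group_op G /\ torsion_free G.

Definition rel_closure (X S : Op -> Prop) (x : Op) : Prop :=
  X x /\ forall U, is_open U -> U x -> exists y, [/\ U y, X y & S y].

Definition rel_interior (X A : Op -> Prop) (x : Op) : Prop :=
  X x /\ exists U, [/\ is_open U, U x & forall y, U y -> X y -> A y].

Definition nowhere_dense_in (X S : Op -> Prop) : Prop :=
  forall x, ~ rel_interior X (rel_closure X S) x.

Definition comeager_in (X P : Op -> Prop) : Prop :=
  exists N : nat -> (Op -> Prop),
    (forall n, nowhere_dense_in X (fun y => X y /\ N n y)) /\
    (forall G, X G -> ~ P G -> exists n, N n G).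

Definition iso_to_Q (G : Op) : Prop :=
  exists phi : nat -> rat, bijective phi /\
    forall a b, phi (G (a, b)) = (phi a + phi b)%R.

(* Main.v *)
Require Import Defs.
From HB Require Import structures.
From mathcomp Require Import all_boot all_order all_algebra.
Set Implicit Arguments. Unset Strict Implicit. Unset Printing Implicit Defensive.
Import GRing.Theory Num.Theory.
From Stdlib Require Import ClassicalEpsilon Classical.
From mathcomp Require Import ring.

Record tfa := TFA { op : Op; opP : in_T op }.

Definition car (g : tfa) : Type := nat.
HB.instance Definition _ g := Choice.copy (car g) nat.

Section Pack.
Variable g : tfa.

Lemma tfa_ex_inv (a : car g) : exists b : nat, op g (a, b) == 0%N.
Proof. case: (opP g) => [[_ _ _ H] _]; case: (H a) => b hb; exists b; exact/eqP. Qed.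
Definition tneg (a : car g) : car g := xchoose (tfa_ex_inv a).
Definition tadd (a b : car g) : car g := op g (a, b).
Definition tzero : car g := 0%N.
Lemma taddA : associative tadd.
Proof. case: (opP g) => [[H _ _ _] _] a b c; rewrite /tadd H //. Qed.
Lemma taddC : commutative tadd.
Proof. case: (opP g) => [[_ H _ _] _] a b; rewrite /tadd H //. Qed.
Lemma tadd0 : left_id tzero tadd.
Proof. case: (opP g) => [[_ _ H _] _] a; rewrite /tadd H //. Qed.
Lemma taddN : left_inverse tzero tneg tadd.
Proof. move=> a; rewrite taddC /tadd; exact/eqP/(xchooseP (tfa_ex_inv a)). Qed.
End Pack.

HB.instance Definition _ g := GRing.isZmodule.Build (car g) (@taddA g) (@taddC g) (@tadd0 g) (@taddN g).

Section Th.
Variable g : tfa.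
Local Open Scope ring_scope.
Lemma addE (a b : car g) : a + b = op g (a, b). Proof. by []. Qed.
Lemma zeroE : (0 : car g) = 0%N :> nat. Proof. by []. Qed.
Lemma gmulE (n : nat) (x : car g) : gmul (op g) n x = x *+ n.
Proof. elim: n => [|n IH] //=; by rewrite mulrS IH. Qed.
End Th.

Section LinAlg.
Local Open Scope ring_scope.

Lemma nonroot (p : {poly rat}) : p != 0 -> exists t : rat, ~~ root p t.
Proof.
move=> p0; set rs := [seq (i%:R : rat) | i <- iota 0 (size p)].
case: (boolP (all (root p) rs)) => [H|/allPn [t _ Ht]]; last by exists t.
have U : uniq rs.
  rewrite map_inj_uniq ?iota_uniq // => i j /eqP; rewrite eqr_nat => /eqP //.
by have := max_poly_roots p0 H U; rewrite size_map size_iota ltnn.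
Qed.

Lemma avoid m (s : seq 'rV[rat]_m) : all (fun w => w != 0) s ->
  exists c : 'cV[rat]_m, forall w, w \in s -> w *m c != 0.
Proof.
move=> Hs.
pose pw (w : 'rV[rat]_m) := \poly_(i < m) (oapp (fun j => w 0 j) 0 (insub i)).
have pw0 : forall w, w != 0 -> pw w != 0.
  move=> w; apply: contraNneq => H; apply/eqP/rowP => i; rewrite mxE.
  have := congr1 (fun q : {poly rat} => q`_i) H; rewrite coef_poly ltn_ord coef0 valK /= => -> //.
have P0 : \prod_(w <- s) pw w != 0.
  rewrite prodf_seq_neq0; apply/allP => w ws /=; apply: pw0; exact: (allP Hs).
have [t Ht] := nonroot P0.
exists (\col_(i < m) t ^+ i) => w ws.
have : (pw w).[t] != 0.
  move: Ht; rewrite /root horner_prod prodf_seq_neq0 => /allP; apply; exact: ws.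
apply: contraNneq => H.
suff <- : (w *m \col_(i < m) t ^+ i) 0 0 = (pw w).[t] by rewrite H mxE.
rewrite horner_poly mxE; apply: eq_bigr => i _; by rewrite mxE valK.
Qed.

Lemma clear_den k (u : 'rV[rat]_k) : exists N : nat, exists z : 'I_k -> int,
  (0 < N)%N /\ forall l, (z l)%:~R = u 0 l * N%:R.
Proof.
pose D (l : 'I_k) := absz (denq (u 0 l)).
exists (\prod_(l < k) D l); exists (fun l => numq (u 0 l) * (\prod_(j < k | j != l) D j)%:Z).
split.
  by apply: prodn_gt0 => l; rewrite /D absz_gt0 denq_neq0.
move=> l; rewrite [in RHS](bigD1 l) //= natrM intrM.
have -> : (D l)%:R = (denq (u 0 l))%:~R :> rat.
  by rewrite /D natr_absz ger0_norm // ltW // denq_gt0.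
rewrite -{2}[u 0 l](divq_num_den) mulrA mulfVK //.
by rewrite intr_eq0 denq_neq0.
Qed.
End LinAlg.

Section Core.
Variable g : tfa.
Local Notation V := (car g).
Local Open Scope ring_scope.

Lemma tf_natmul (x : V) n : (0 < n)%N -> x *+ n = 0 -> x = 0.
Proof.
move=> n0 H; case: (opP g) => _ tf; case: (eqVneq x 0) => // /eqP x0.
by exfalso; apply: (tf x n) => //; rewrite gmulE H.
Qed.

Lemma sel_ord (M : zmodType) (A : seq V) (h : 'I_(size A) -> M) x
  (Hx : (index x A < size A)%N) : uniq A ->
  \sum_(i < size A) (if nth 0 A i == x then h i else 0) = h (Ordinal Hx).
Proof.
move=> uA; rewrite (bigD1 (Ordinal Hx)) //= nth_index -?index_mem // eqxx.
rewrite big1 ?addr0 // => i /negPf ni.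
case: ifP => // /eqP E; move: ni; suff -> : i == Ordinal Hx by [].
apply/eqP/val_inj => /=; rewrite -E index_uniq //.
Qed.

Lemma sel_elt (A : seq V) x : uniq A -> x \in A ->
  \sum_(i < size A) nth 0 A i *~ ((nth 0 A i == x) : nat)%:Z = x.
Proof.
move=> uA xA; have Hx : (index x A < size A)%N by rewrite index_mem.
transitivity (\sum_(i < size A) (if nth 0 A i == x then nth 0 A i else 0)).
  by apply: eq_bigr => i _; case: eqP.
by rewrite (sel_ord (fun i : 'I_(size A) => nth 0 A i) Hx uA) /= nth_index.
Qed.


Definition rr (A : seq V) (t : (V * V) * V) (i : 'I_(size A)) : int :=
  ((nth 0 A i == t.2) : nat)%:Z - ((nth 0 A i == t.1.1) : nat)%:Z
  - ((nth 0 A i == t.1.2) : nat)%:Z.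

Lemma ev_rr (A : seq V) t : uniq A -> t.1.1 \in A -> t.1.2 \in A -> t.2 \in A ->
  t.2 = t.1.1 + t.1.2 -> \sum_(i < size A) nth 0 A i *~ rr t i = 0.
Proof.
move=> uA ha hb hc E.
rewrite /rr; under eq_bigr => i _ do rewrite !mulrzBr.
rewrite !sumrB !sel_elt // E.
by rewrite [t.1.1 + _]addrC addrK subrr.
Qed.

Lemma delta_sum m (i : 'I_m) (h : 'I_m -> V) :
  \sum_(i' < m) h i' *~ ((i' == i) : nat)%:Z = h i.
Proof.
rewrite (bigD1 i) //= eqxx mulr1z big1 ?addr0 // => j /negPf -> //.
Qed.

Lemma core (A : seq V) (rels : seq ((V * V) * V)) : uniq A ->
 (forall t, t \in rels -> [/\ t.1.1 \in A, t.1.2 \in A, t.2 \in A & t.2 = t.1.1 + t.1.2]) ->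
 exists vf : V -> rat, {in A &, injective vf} /\
   (forall t, t \in rels -> vf t.2 = vf t.1.1 + vf t.1.2).
Proof.
move=> uA Hrels.
pose m := size A; pose k := size rels.
pose t0 : (V * V) * V := ((0, 0), 0).
pose r (l : 'I_k) (i : 'I_m) : int := rr (nth t0 rels l) i.
pose Rq : 'M[rat]_(k, m) := \matrix_(l, i) (r l i)%:~R.
pose C := cokermx Rq.
have dnz : forall (i : 'I_m) (j : 'I_m), i != j -> (delta_mx 0 i - delta_mx 0 j : 'M[rat]_(1, m)) *m C != 0.
  move=> i j ij; apply/eqP => H.
  have : ((delta_mx 0 i - delta_mx 0 j : 'M[rat]_(1, m)) <= Rq)%MS by rewrite submxE H.
  case/submxP => u Hu.
  have [N [z [N0 Hz]]] := clear_den u.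
  have Eint : forall i', (((i' == i):nat)%:Z - ((i' == j):nat)%:Z) * N%:Z
       = \sum_l z l * r l i'.
    move=> i'; apply: (intr_inj (R:=rat)).
    have := congr1 (fun M : 'M[rat]_(1, m) => M 0 i') Hu; rewrite !mxE !eqxx /= => E.
    rewrite intrM rmorphB /= E mulr_suml rmorph_sum; apply: eq_bigr => l _.
    by rewrite mxE rmorphM /= Hz mulrAC.
  have E2 : \sum_(i' < m) nth 0 A i' *~ ((((i' == i):nat)%:Z - ((i' == j):nat)%:Z) * N%:Z)
     = \sum_(i' < m) nth 0 A i' *~ (\sum_l z l * r l i').
    by apply: eq_bigr => i' _; rewrite Eint.
  have L : \sum_(i' < m) nth 0 A i' *~ ((((i' == i):nat)%:Z - ((i' == j):nat)%:Z) * N%:Z)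
     = (nth 0 A i - nth 0 A j) *~ N.
    under eq_bigr => i' _ do rewrite mulrzA mulrzBr.
    by rewrite -mulrz_suml sumrB (delta_sum i (fun i' : 'I_m => nth 0 A i')) (delta_sum j (fun i' : 'I_m => nth 0 A i')).
  have R0 : \sum_(i' < m) nth 0 A i' *~ (\sum_l z l * r l i') = 0.
    under eq_bigr => i' _ do rewrite mulrz_sumr.
    rewrite exchange_big /=; apply: big1 => l _.
    under eq_bigr => i' _ do rewrite mulrC mulrzA.
    rewrite -mulrz_suml.
    have [h1 h2 h3 h4] := Hrels (nth t0 rels l) (mem_nth t0 (ltn_ord l)).
    by rewrite /r ev_rr ?mul0rz.
  move: E2; rewrite L R0 -pmulrn => /(tf_natmul N0) /eqP; rewrite subr_eq0.
  rewrite nth_uniq ?(ltn_ord) //; exact/negP.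
pose S := [seq (delta_mx 0 p.1 - delta_mx 0 p.2 : 'M[rat]_(1,m)) *m C
            | p <- [seq p <- enum {: 'I_m * 'I_m} | p.1 != p.2]].
have [c Hc] : exists c : 'cV[rat]_m, forall w, w \in S -> w *m c != 0.
  apply: avoid; apply/allP => w /mapP [p]; rewrite mem_filter => /andP [pn _] ->.
  exact: dnz.
pose v := C *m c.
have Rv : Rq *m v = 0 by rewrite /v mulmxA mulmx_coker mul0mx.
have vdef : C *m c = v by [].
clearbody v.
have vinj : forall i j : 'I_m, v i 0 = v j 0 -> i = j.
  move=> i j Hv; case: (eqVneq i j) => // ij; exfalso.
  have : (delta_mx 0 i - delta_mx 0 j : 'M[rat]_(1,m)) *m C *m c != 0.
    by apply: Hc; apply/mapP; exists (i, j) => //; rewrite mem_filter ij mem_enum.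
  apply/negP; rewrite negbK -mulmxA vdef mulmxBl -!rowE.
  by apply/eqP/rowP => z; rewrite !ord1 !mxE Hv subrr.
pose vf (x : V) := \sum_(i < m) (if nth 0 A i == x then v i 0 else 0).
have vfE : forall x (Hx : (index x A < m)%N), vf x = v (Ordinal Hx) 0.
  by move=> x Hx; apply: (sel_ord (fun i => v i 0) Hx uA).
exists vf; split.
  move=> x y xA yA.
  have xA' : (index x A < m)%N by rewrite index_mem.
  have yA' : (index y A < m)%N by rewrite index_mem.
  rewrite (vfE x xA') (vfE y yA') => /vinj /(congr1 val) /= E.
  by rewrite -(nth_index 0 xA) -(nth_index 0 yA) E.
move=> t tr; have [h1 h2 h3 h4] := Hrels t tr.
have lk : (index t rels < k)%N by rewrite index_mem.
have := congr1 (fun M : 'cV[rat]_k => M (Ordinal lk) 0) Rv; rewrite !mxE.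
under eq_bigr => i _ do rewrite mxE /r /= nth_index //.
have ev : forall x, \sum_(i < m) ((nth 0 A i == x : nat)%:Z)%:~R * v i 0 = vf x.
  by move=> x; apply: eq_bigr => i _; case: eqP => _; rewrite ?mul1r ?mul0r.
rewrite /rr; under eq_bigr => i _ do rewrite !rmorphB /= !mulrBl.
rewrite !sumrB !ev => /eqP; rewrite subr_eq0 subr_eq => /eqP ->.
by rewrite addrC.
Qed.
End Core.

Section Iso.
Variable g : tfa.
Local Notation V := (car g).
Local Open Scope ring_scope.
Definition e1 : V := 1%N.
Lemma e1_neq0 : e1 != 0. Proof. by []. Qed.

Lemma tf_intmul (x : V) (z : int) : x != 0 -> x *~ z = 0 -> z = 0.
Proof.
move=> x0; case: (intP z) => [|n|n] // H; exfalso; move/negP: x0; apply; apply/eqP.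
  by apply: (@tf_natmul g _ n.+1) => //; rewrite pmulrn.
apply: (@tf_natmul g _ n.+1) => //; rewrite pmulrn; apply/eqP.
by rewrite -oppr_eq0 -mulrNz H.
Qed.

Hypothesis hdiv : forall (x : V) n, (0 < n)%N -> exists y : V, y *+ n = x.
Hypothesis hrank : forall x : V, exists a, exists b : int, (0 < a)%N /\ x *+ a = e1 *~ b.

Lemma ch (x : V) : {ab : nat * int | (0 < ab.1)%N /\ x *+ ab.1 = e1 *~ ab.2}.
Proof. apply: constructive_indefinite_description; have [a [b H]] := hrank x; by exists (a, b). Qed.

Definition phiQ (x : V) : rat := ((sval (ch x)).2)%:~R / ((sval (ch x)).1)%:R.

Lemma cross (x : V) a b a' b' : x *+ a = e1 *~ b -> x *+ a' = e1 *~ b' -> b * a'%:Z = b' * a%:Z.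
Proof.
move=> E E'; apply/eqP; rewrite -subr_eq0; apply/eqP; apply: (tf_intmul e1_neq0).
by rewrite mulrzBr !mulrzA -E -E' -!pmulrn -!mulrnA mulnC subrr.
Qed.

Lemma phi_spec x a b : (0 < a)%N -> x *+ a = e1 *~ b -> phiQ x = b%:~R / a%:R.
Proof.
move=> a0 E; rewrite /phiQ; case: (ch x) => [[a' b']] /= [a0' E'].
have H := cross E E'.
apply/eqP; rewrite eqr_div ?pnatr_eq0 -?lt0n //.
by rewrite -[a%:R]/(a%:Z%:~R : rat) -[a'%:R]/(a'%:Z%:~R : rat) -!intrM H eqxx.
Qed.

Lemma phiQ_add (x y : V) : phiQ (x + y) = phiQ x + phiQ y.
Proof.
case: (ch x) => [[a b]] /= [a0 E]; case: (ch y) => [[a' b']] /= [a0' E'].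
have E2 : (x + y) *+ (a * a') = e1 *~ (b * a'%:Z + b' * a%:Z).
  rewrite mulrnDl mulrnA E [in y *+ _]mulnC mulrnA E' mulrzDr !mulrzA !pmulrn //.
rewrite (phi_spec _ E2) ?muln_gt0 ?a0 // (phi_spec a0 E) (phi_spec a0' E').
rewrite intrD !intrM natrM /=.
have ha : (a%:R : rat) != 0 by rewrite pnatr_eq0 -lt0n.
have ha' : (a'%:R : rat) != 0 by rewrite pnatr_eq0 -lt0n.
rewrite -[a'%:Z%:~R]/(a'%:R : rat) -[a%:Z%:~R]/(a%:R : rat). by rewrite addf_div.
Qed.

Lemma phiQ_inj : injective phiQ.
Proof.
move=> x y; case: (ch x) => [[a b]] /= [a0 E]; case: (ch y) => [[a' b']] /= [a0' E'].
rewrite (phi_spec a0 E) (phi_spec a0' E') => /eqP.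
rewrite eqr_div ?pnatr_eq0 -?lt0n // -[a%:R]/(a%:Z%:~R : rat) -[a'%:R]/(a'%:Z%:~R : rat).
rewrite -!intrM eqr_int => /eqP H.
have : (x - y) *+ (a * a') = 0.
  rewrite mulrnBl mulrnA E [in y *+ _]mulnC mulrnA E' !pmulrn -!mulrzA H subrr //.
have aa0 : (0 < a * a')%N by rewrite muln_gt0 a0 a0'.
move/(tf_natmul aa0) => /eqP.
by rewrite subr_eq0 => /eqP.
Qed.

Lemma phiQ_surj (q : rat) : exists x, phiQ x = q.
Proof.
have d0 : (0 < absz (denq q))%N by rewrite absz_gt0 denq_neq0.
have [y Hy] := hdiv (e1 *~ numq q) d0.
exists y; rewrite (phi_spec d0 Hy) natr_absz ger0_norm ?ltW ?denq_gt0 //.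
exact: divq_num_den.
Qed.

Lemma iso_of : iso_to_Q (op g).
Proof.
have sur : forall q : rat, exists x : nat, phiQ x == q.
  by move=> q; have [x Hx] := phiQ_surj q; exists x; apply/eqP.
exists phiQ; split; last by move=> a b; exact: phiQ_add.
exists (fun q => xchoose (sur q)) => [x|q]; last exact/eqP/(xchooseP (sur q)).
by apply: phiQ_inj; apply/eqP/(xchooseP (sur (phiQ x))).
Qed.
End Iso.

Section Raw.
Local Open Scope ring_scope.

Lemma phi_gmul (G : Op) (phi : nat -> rat) : phi 0%N = 0 ->
  (forall a b, phi (G (a, b)) = phi a + phi b) ->
  forall n x, phi (gmul G n x) = phi x *+ n.
Proof. by move=> p0 hp; elim=> [|n IH] x //=; rewrite hp IH mulrS. Qed.

Lemma raw_props (G : Op) (phi : nat -> rat) : bijective phi -> phi 0%N = 0 ->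
  (forall a b, phi (G (a, b)) = phi a + phi b) ->
  (forall x n, (0 < n)%N -> exists y, gmul G n y = x) /\
  (forall x, exists a b, (0 < a)%N /\
     (gmul G a x = gmul G b 1%N \/ G (gmul G a x, gmul G b 1%N) = 0%N)).
Proof.
move=> [psi K1 K2] p0 hp; have pg := phi_gmul p0 hp.
have pinj : injective phi := can_inj K1.
split.
  move=> x n n0; exists (psi (phi x / n%:R)); apply: pinj.
  rewrite pg K2 -[X in X = _]mulr_natr mulfVK // pnatr_eq0 -lt0n //.
move=> x.
have p1 : phi 1%N != 0 by apply/eqP; rewrite -p0 => /pinj.
pose q := phi x / phi 1%N.
have hq : phi x = (numq q)%:~R / (denq q)%:~R * phi 1%N by rewrite divq_num_den /q mulfVK.
have d0 : (0 < absz (denq q))%N by rewrite absz_gt0 denq_neq0.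
exists (absz (denq q)), (absz (numq q)); split => //.
have hd : ((absz (denq q))%:R : rat) = (denq q)%:~R by rewrite natr_absz ger0_norm ?ltW ?denq_gt0.
have dn0 : ((denq q)%:~R : rat) != 0 by rewrite intr_eq0 denq_neq0.
case: (lerP 0 (numq q)) => hn; [left | right]; apply: pinj; rewrite ?hp !pg -[phi x *+ _]mulr_natr -[phi 1%N *+ _]mulr_natr hd hq.
  rewrite natr_absz ger0_norm // mulrAC mulfVK //; exact: mulrC.
rewrite natr_absz ltr0_norm // mulrAC mulfVK // p0. by rewrite rmorphN mulrN mulrC subrr.
Qed.

End Raw.

Module NR.
From mathcomp Require Import boolp classical_sets functions cardinality.
Lemma nat_rat_bij : exists f : nat -> rat, bijective f.
Proof.
have /card_esym /card_set_bijP [f H] := card_rat.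
move: H => [] _ fi fs.
have inj : injective f by move=> x y; apply: fi; rewrite inE.
have sur : forall y : rat, exists x, f x == y.
  move=> y; have [x _ <-] := fs y I; by exists x.
exists f; exists (fun y => xchoose (sur y)) => [x|y]; last exact/eqP/(xchooseP (sur y)).
by apply: inj; apply/eqP/(xchooseP (sur (f x))).
Qed.
End NR.

Section Ext.
Local Open Scope ring_scope.
Definition swapq (p q r : rat) := if r == p then q else if r == q then p else r.
Lemma swapqK p q : involutive (swapq p q).
Proof.
move=> r; rewrite /swapq; case: (eqVneq r p) => [->|rp].
  by rewrite eqxx; case: eqP.
case: (eqVneq r q) => [->|rq]; first by rewrite eqxx.
by rewrite (negPf rp) (negPf rq).
Qed.

Lemma extend (L : seq nat) (f : nat -> rat) : {in L &, injective f} ->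
  exists psi : nat -> rat, bijective psi /\ {in L, psi =1 f}.
Proof.
elim: L => [|x L IH] fi.
  by have [s hs] := NR.nat_rat_bij; exists s; split.
have [|psi [bp hp]] := IH.
  by move=> a b aL bL; apply: fi; rewrite inE ?aL ?bL orbT.
exists (swapq (psi x) (f x) \o psi); split.
  apply: bij_comp => //; exact: (inv_bij (swapqK _ _)).
move=> y; rewrite inE => /orP [/eqP ->|yL] /=.
  by rewrite /swapq eqxx.
case: (eqVneq y x) => [->|yx]; first by rewrite /swapq eqxx.
rewrite /swapq (hp y yL).
have -> : (f y == psi x) = false.
  rewrite -(hp y yL); apply/negP => /eqP E; move: yx; rewrite (bij_inj bp E) eqxx //.
have -> // : (f y == f x) = false.
apply/negP => /eqP E; move: yx; rewrite (fi y x) ?inE ?yL ?eqxx ?orbT //.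
Qed.
End Ext.

Section Dens.
Local Open Scope ring_scope.

Lemma density (G : Op) : in_T G -> forall F : seq (nat * nat),
  exists psi : nat -> rat, bijective psi /\ psi 0%N = 0 /\
    forall p, p \in F -> psi (G p) = psi p.1 + psi p.2.
Proof.
move=> TG F; pose g := TFA TG.
pose F' := (0%N, 0%N) :: F.
pose A : seq (car g) := undup (flatten [seq [:: p.1; p.2; G p] | p <- F']).
pose rels : seq ((car g * car g) * car g) := [seq ((p.1, p.2), G p) | p <- F'].
have memA : forall p, p \in F' -> [/\ p.1 \in A, p.2 \in A & G p \in A].
  move=> p pF; rewrite !mem_undup; split; apply/flattenP;
    exists [:: p.1; p.2; G p]; rewrite ?inE ?eqxx ?orbT //; exact: (map_f _ pF).
have Hrels : forall t, t \in rels ->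
    [/\ t.1.1 \in A, t.1.2 \in A, t.2 \in A & t.2 = t.1.1 + t.1.2].
  move=> t /mapP [p pF ->]; have [h1 h2 h3] := memA p pF; split => //=.
  by case: p pF {h1 h2 h3}.
have [vf [vinj vrel]] := @core g A rels (undup_uniq _) Hrels.
have [psi [bp hp]] := extend vinj.
have hF : forall p, p \in F' -> psi (G p) = psi p.1 + psi p.2.
  move=> p pF; have [h1 h2 h3] := memA p pF.
  rewrite !hp //; exact: (vrel ((p.1, p.2), G p) (map_f _ pF)).
have p0 : psi 0%N = 0.
  have := hF (0%N, 0%N) (mem_head _ _).
  have -> : G (0%N, 0%N) = 0%N by have [[_ _ H _] _] := TG; rewrite H.
  by move/eqP; rewrite -subr_eq0 /= opprD addrA subrr add0r oppr_eq0 => /eqP.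
exists psi; split => //; split => // p pF; apply: hF; by rewrite inE pF orbT.
Qed.


Lemma transport (psi : nat -> rat) : bijective psi -> psi 0%N = 0 ->
  exists G' : Op, in_T G' /\ (forall a b, psi (G' (a, b)) = psi a + psi b).
Proof.
case=> psinv K1 K2 p0.
pose G' : Op := fun p => psinv (psi p.1 + psi p.2).
have hom : forall a b, psi (G' (a, b)) = psi a + psi b by move=> a b; rewrite /G' K2.
have pinj : injective psi := can_inj K1.
exists G'; split => //; split; [split|].
- by move=> a b c; apply: pinj; rewrite !hom addrA.
- by move=> a b; apply: pinj; rewrite !hom addrC.
- by move=> a; apply: pinj; rewrite hom p0 add0r.
- by move=> a; exists (psinv (- psi a)); apply: pinj; rewrite hom K2 p0 subrr.
- move=> x n x0 n0 /(congr1 psi); rewrite (phi_gmul p0 hom) p0 => /eqP.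
  rewrite mulrn_eq0 => /orP [/eqP n00|/eqP]; first by rewrite n00 in n0.
  by rewrite -p0 => /pinj.
Qed.

Fixpoint gpts (G : Op) n x : seq (nat * nat) :=
  if n is k.+1 then (x, gmul G k x) :: gpts G k x else [::].

Lemma gpts_agree (G H : Op) n x : (forall i, i \in gpts G n x -> H i = G i) ->
  gmul H n x = gmul G n x.
Proof.
elim: n => [|n IH] //= hH.
rewrite IH; first by rewrite hH // mem_head.
by move=> i iL; apply: hH; rewrite inE iL orbT.
Qed.

Lemma nd_gen (S : Op -> Prop) :
  (forall G', in_T G' -> forall psi : nat -> rat, bijective psi -> psi 0%N = 0 ->
     (forall a b, psi (G' (a, b)) = psi a + psi b) ->
     exists L : seq (nat * nat), forall H, (forall i, i \in L -> H i = G' i) -> ~ S H) ->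
  nowhere_dense_in in_T (fun y => in_T y /\ S y).
Proof.
move=> HS G0 [TG0 [U [oU UG0 hU]]].
have [F hF] := oU G0 UG0.
have [psi [bp [p0 hp]]] := density TG0 F.
have [G' [TG' hom]] := transport bp p0.
have UG' : U G'.
  apply: hF => i iF; apply: (bij_inj bp); case: i iF => a b iF.
  by rewrite hom (hp (a, b) iF).
have [_ cl] := hU G' UG' TG'.
have [L hL] := HS G' TG' psi bp p0 hom.
have [y [Vy Ty [_ Sy]]] := cl (fun H => forall i, i \in L -> H i = G' i)
  (fun f hf => ex_intro _ L (fun g hg i iL => etrans (hg i iL) (hf i iL)))
  (fun i _ => erefl).
exact: hL y Vy Sy.
Qed.
End Dens.

Definition Nset (k : nat) (G : Op) : Prop :=
  match (unpickle k : option (nat * nat * bool)) with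
  | Some (x, n, true) => (0 < n)%N /\ forall y, gmul G n y <> x
  | Some (x, _, false) => forall a b, (0 < a)%N ->
      gmul G a x <> gmul G b 1%N /\ G (gmul G a x, gmul G b 1%N) <> 0%N
  | None => False
  end.

Lemma Nset_nd k : nowhere_dense_in in_T (fun y => in_T y /\ Nset k y).
Proof.
apply: nd_gen => G' TG' psi bp p0 hom.
have [hdiv hrk] := raw_props bp p0 hom.
rewrite /Nset; case: (unpickle k) => [[[x n] []]|]; last by exists [::] => ? _.
- case: (posnP n) => [->|n0]; first by exists [::] => H _ [].
  have [y hy] := hdiv x n n0.
  exists (gpts G' n y) => H hH [_ /(_ y)]; apply.
  by rewrite (gpts_agree hH).
- have [a [b [a0 hab]]] := hrk x.
  exists (gpts G' a x ++ gpts G' b 1%N ++ [:: (gmul G' a x, gmul G' b 1%N)]) => H hH hS.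
  have [h1 h2] := hS a b a0.
  have e1 : gmul H a x = gmul G' a x.
    by apply: gpts_agree => i iL; apply: hH; rewrite mem_cat iL.
  have e2 : gmul H b 1%N = gmul G' b 1%N.
    by apply: gpts_agree => i iL; apply: hH; rewrite !mem_cat iL orbT.
  have e3 : H (gmul G' a x, gmul G' b 1%N) = G' (gmul G' a x, gmul G' b 1%N).
    by apply: hH; rewrite !mem_cat mem_head !orbT.
  by case: hab => E; [apply: h1 | apply: h2]; rewrite e1 e2 ?e3.
Qed.

Theorem theorem4p4 : comeager_in in_T iso_to_Q.
Proof.
exists Nset; split; first exact: Nset_nd.
move=> G TG niso; apply: NNPP => hn; apply: niso.
pose g := TFA TG.
apply: (@iso_of g).
  move=> x n n0; apply: NNPP => hy; apply: hn; exists (pickle (x, n, true)).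
  rewrite /Nset pickleK; split => // y E; apply: hy; exists y.
  by rewrite -gmulE.
move=> x; apply: NNPP => hab; apply: hn; exists (pickle (x, 0%N, false)).
rewrite /Nset pickleK => a b a0; split => E; apply: hab; exists a.
  exists (Posz b); split => //; rewrite -pmulrn -!gmulE; exact: E.
exists (- Posz b)%R; split => //; rewrite mulrNz -pmulrn; apply/eqP; rewrite -addr_eq0.
by rewrite -!gmulE; apply/eqP; exact: E.
Qed.
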